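(* For integers $a,t$ let $$f_{a,1,t}(X)=X^3+a^2(a^3-2)X^2-a(a^3-1)X+1+tX(aX-1)\in\mathbf{Z}[X].$$ There exists an integer $A\geq 1$ such that for all integers $t\geq 1$ and $a\geq A$, the polynomial $f_{a,1,t}(X)$ is irreducible over $\mathbf{Q}$. *)

(* Defs.v *)
From mathcomp Require Import all_boot all_order all_algebra.
Set Implicit Arguments. Unset Strict Implicit. Unset Printing Implicit Defensive.
Import GRing.Theory Num.Theory.
Local Open Scope ring_scope.

Definition f_a1t (a t : int) : {poly int} :=
  'X^3 + (a ^+ 2 * (a ^+ 3 - 2))%:P * 'X^2 - (a * (a ^+ 3 - 1))%:P * 'X + 1
  + t%:P * 'X * (a%:P * 'X - 1).

Definition f_a1t_Q (a t : int) : {poly rat} := map_poly (intr : int -> rat) (f_a1t a t).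

(* Main.v *)
Require Import Defs.
From mathcomp Require Import all_boot all_order all_algebra.
From mathcomp Require Import ring lra zify.
Import GRing.Theory Num.Theory.
Local Open Scope ring_scope.

Lemma fE (a t : int) : f_a1t_Q a t = 'X^3 + ((a ^+ 2 * (a ^+ 3 - 2) + t * a)%:~R)%:P * 'X^2
   + ((- (a * (a ^+ 3 - 1)) - t)%:~R)%:P * 'X + 1.
Proof.
rewrite /f_a1t_Q /f_a1t.
rewrite !rmorphD ?rmorphN ?rmorphB !rmorphM ?rmorphN ?rmorphB ?rmorph1 /= !map_polyC /= ?map_polyXn ?map_polyX.
rewrite !(rmorphD, rmorphB, rmorphM, rmorphN, rmorphXn, rmorph1) /=.
rewrite ?(polyCD, polyCB, polyCM, polyCN) /=.
rewrite ?rmorphM /= ?map_polyC ?map_polyX /=.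
ring.
Qed.

Lemma pos1 (a t : int) : 1 <= t -> 2 <= a ->
  0 < 1 + (a ^+ 2 * (a ^+ 3 - 2) + t * a) + (- (a * (a ^+ 3 - 1)) - t) + 1.
Proof. move=> ht ha. nia. Qed.
Lemma pos2 (a t : int) : 1 <= t -> 2 <= a ->
  0 < -1 + (a ^+ 2 * (a ^+ 3 - 2) + t * a) - (- (a * (a ^+ 3 - 1)) - t) + 1.
Proof. move=> ht ha. nia. Qed.

Lemma ratroot (b c : int) (x : rat) :
  x ^+ 3 + b%:~R * x ^+ 2 + c%:~R * x + 1 = 0 -> x = 1 \/ x = -1.
Proof.
move=> hx.
move: (numqE x) (denq_gt0 x) (coprime_num_den x).
move: (numq x) (denq x) => n d hn dpos cop0.
have dn0 : (d%:~R : rat) != 0 by rewrite intr_eq0; lia.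
have xE : x = n%:~R / d%:~R by apply/(mulIf dn0); rewrite mulfVK // -hn.
have E : n ^+ 3 + b * n ^+ 2 * d + c * n * d ^+ 2 + d ^+ 3 = 0.
  apply/eqP; rewrite -(intr_eq0 rat); apply/eqP.
  have -> : ((n ^+ 3 + b * n ^+ 2 * d + c * n * d ^+ 2 + d ^+ 3)%:~R : rat)
     = (d%:~R) ^+ 3 * (x ^+ 3 + b%:~R * x ^+ 2 + c%:~R * x + 1).
    by rewrite xE; field.
  by rewrite hx mulr0.
have cop : coprimez n d by rewrite coprimezE.
have d1 : d = 1.
  have : (d %| n ^+ 3 * 1)%Z.
    apply/dvdzP; exists (- (b * n ^+ 2 + c * n * d + d ^+ 2)).
    by rewrite mulr1; apply/eqP; rewrite -subr_eq0 -E; apply/eqP; ring.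
  rewrite Gauss_dvdzr ?dvdz1; last by apply: coprimezXr; rewrite coprimez_sym.
  move=> /eqP h. lia.
have n1 : (n %| d ^+ 3 * 1)%Z.
  apply/dvdzP; exists (- (n ^+ 2 + b * n * d + c * d ^+ 2)).
  by rewrite mulr1; apply/eqP; rewrite -subr_eq0 -E; apply/eqP; ring.
move: n1; rewrite Gauss_dvdzr ?dvdz1; last by apply: coprimezXr.
move=> /eqP h.
have hx' : x = n%:~R by rewrite xE d1 divr1.
have : n = 1 \/ n = -1 by lia.
rewrite hx'; case=> ->; [left|right]; by rewrite ?rmorphN ?rmorph1.
Qed.

Theorem mainTheorem2 :
  exists A : int, 1 <= A /\
    forall t a : int, 1 <= t -> A <= a -> irreducible_poly (f_a1t_Q a t).
Proof.
exists 2; split => // t a ht ha.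
apply: cubic_irreducible.
  have -> : size (f_a1t_Q a t) = 4%N.
    rewrite fE -!addrA !mul_polyC size_polyDl size_polyXn //.
    apply: (leq_ltn_trans (size_polyD _ _)); rewrite gtn_max; apply/andP; split.
      by apply: (leq_ltn_trans (size_scale_leq _ _)); rewrite size_polyXn.
    apply: (leq_ltn_trans (size_polyD _ _)); rewrite gtn_max; apply/andP; split.
      by apply: (leq_ltn_trans (size_scale_leq _ _)); rewrite size_polyX.
    by rewrite size_poly1.
  by [].
move=> x; apply/negP; rewrite /root => /eqP hx.
have {}hx : x ^+ 3 + (a ^+ 2 * (a ^+ 3 - 2) + t * a)%:~R * x ^+ 2 +
      (- (a * (a ^+ 3 - 1)) - t)%:~R * x + 1 = 0.
  by rewrite -hx fE !hornerE; ring.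
case: (ratroot _ _ _ hx) => hx1; move: hx; rewrite hx1 => /eqP; apply/negP.
  have := pos1 _ _ ht ha.
  set v := (X in 0 < X) => hv.
  have -> : (1 ^+ 3 + (a ^+ 2 * (a ^+ 3 - 2) + t * a)%:~R * 1 ^+ 2 +
      (- (a * (a ^+ 3 - 1)) - t)%:~R * 1 + 1 : rat) = v%:~R.
    by rewrite /v; rewrite !rmorphD /=; ring.
  by rewrite intr_eq0; lia.
have := pos2 _ _ ht ha.
set v := (X in 0 < X) => hv.
have -> : ((-1) ^+ 3 + (a ^+ 2 * (a ^+ 3 - 2) + t * a)%:~R * (-1) ^+ 2 +
    (- (a * (a ^+ 3 - 1)) - t)%:~R * (-1) + 1 : rat) = v%:~R.
  by rewrite /v !rmorphD ?rmorphN ?rmorphB /=; ring.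
by rewrite intr_eq0; lia.
Qed.
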